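(* Let $d$ be an even positive integer and $s$ a positive integer with $2s\leqslant d$, and let $k\in\{1,2,\ldots,s-1\}$. Then the indexed family $\{B_\varepsilon\colon \varepsilon\in I^s,\ |\varepsilon|=k\}$ defines a partition of $X_k$; that is, the union of its members is $X_k$ and $B_\varepsilon\cap B_\gamma=\emptyset$ whenever $\varepsilon\neq\gamma$ (empty members allowed).
   Context: Let $I=\{0,1\}$; for a binary vector $x$ let $|x|=\sum_i x_i$. Let $\alpha=(0,\ldots,0)$, $\omega=(1,\ldots,1)\in I^s$. For $\varepsilon\in I^s\setminus\{\alpha,\omega\}$ let $i=t(\varepsilon)$ be the unique index with $\varepsilon_i\neq\varepsilon_{i+1}=\cdots=\varepsilon_s$, and $A_\varepsilon=\{\varepsilon_1\}\times\cdots\times\{\varepsilon_i\}\times I^{s-1-i}\subseteq I^{s-1}$. Define subsets of $I^{d-s}$: $X_0=\{x\colon |x|\leqslant \frac d2-s\}$; $X_k=\{x\colon |x|=\frac d2-s+k\}$ for $0<k<s$; $X_s=\{x\colon |x|\geqslant \frac d2\}$. Writing $x\in I^{d-s}$ as $x=(x',x'')\in I^{d-2s+1}\times I^{s-1}$, for $\varepsilon\in I^s\setminus\{\alpha,\omega\}$ set $B_\varepsilon=\{x=(x',x'')\in X_{|\varepsilon|}\colon x''\in A_\varepsilon\}=X_{|\varepsilon|}\cap(I^{d-2s+1}\times A_\varepsilon)$. *)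

(* Defs.v *)
(* Binary vectors in I^n are n.-tuple bool; the paper's
   1-based coordinate eps_i is  nth false eps (i-1). *)
From mathcomp Require Import all_boot.
Unset Printing Implicit Defensive.

Definition wt n (x : n.-tuple bool) : nat := count id x.

(* is_t eps i : i (1-based) satisfies eps_i <> eps_{i+1} = ... = eps_s *)
Definition is_t s (e : s.-tuple bool) (i : nat) : bool :=
  [&& 0 < i, i < s, nth false e i.-1 != nth false e i &
      [forall j : 'I_s, (i <= j) ==> (nth false e j == nth false e s.-1)]].

(* A_eps = {eps_1} x ... x {eps_i} x I^(s-1-i) with i = t(eps), as a subset of I^(s-1).
   (For eps in {alpha, omega} no such i exists and A_eps is empty; it is never used.) *)
Definition Aset s (e : s.-tuple bool) : {set (s.-1).-tuple bool} :=
  [set y : (s.-1).-tuple bool |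
     [exists i : 'I_s, is_t s e i &&
        [forall j : 'I_s.-1, (j < i) ==> (nth false y j == nth false e j)]]].

Definition Xset d s k : {set (d - s).-tuple bool} :=
  [set x : (d - s).-tuple bool |
     if k == 0 then wt (d - s) x <= d./2 - s
     else if k < s then wt (d - s) x == d./2 - s + k
     else if k == s then d./2 <= wt (d - s) x
     else false].

(* x'' : last s-1 coordinates of x = (x', x'') in I^(d-2s+1) x I^(s-1) *)
Definition xpp d s (x : (d - s).-tuple bool) : (s.-1).-tuple bool :=
  [tuple nth false x (d - 2 * s + 1 + j) | j < s.-1].

Definition Bset d s (e : s.-tuple bool) : {set (d - s).-tuple bool} :=
  [set x in Xset d s (wt s e) | xpp d s x \in Aset s e].

(* Main.v *)
Require Import Defs.
From mathcomp Require Import all_boot.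
From mathcomp Require Import zify.

Lemma c_step (y : seq bool) i : i < size y ->
  count id (take i.+1 y) = count id (take i y) + nth false y i.
Proof. by move=> h; rewrite (take_nth false) // -cats1 count_cat /= addn0. Qed.

Lemma c_le (y : seq bool) i : count id (take i y) <= i.
Proof.
apply: leq_trans (count_size _ _) _; rewrite size_take; case: ifP => // /negbT; lia.
Qed.

Lemma c_mono (y : seq bool) i j : i <= j ->
  count id (take i y) <= count id (take j y) <= count id (take i y) + (j - i).
Proof.
move=> hij; rewrite -(subnKC hij) takeD count_cat leq_addr /= subnKC //.
by rewrite leq_add2l c_le.
Qed.

Definition Fv (y : seq bool) i :=
  count id (take i y) + (~~ nth false y i.-1) * ((size y).+1 - i).

Lemma Fv_lt (y : seq bool) i j : 0 < i -> i < j -> j <= size y -> Fv y i != Fv y j.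
Proof.
case: i => // i' _; case: j => // j' hij hj.
have step := c_step y j' hj.
have mono := c_mono y i'.+1 j' hij.
have st2 := c_step y i' (ltac:(lia) : i' < size y).
move: step mono st2; rewrite /Fv /=.
case: (nth false y i'); case: (nth false y j') => /=; lia.
Qed.

Lemma Fv_inj (y : seq bool) i j : 0 < i -> i <= size y -> 0 < j -> j <= size y ->
  Fv y i = Fv y j -> i = j.
Proof.
move=> i0 hi j0 hj h; case: (ltngtP i j) => // hij.
  by move: (@Fv_lt y i j i0 hij hj); rewrite h eqxx.
by move: (@Fv_lt y j i j0 hij hi); rewrite h eqxx.
Qed.

Lemma Fv_bd (y : seq bool) i : 0 < i -> i <= size y -> 0 < Fv y i <= size y.
Proof.
case: i => // i' _ hi.
have step := c_step y i' hi.
have le := c_le y i'.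
move: step le; rewrite /Fv /=.
case: (nth false y i') => /=; lia.
Qed.

Lemma nthS n (y : seq bool) i b j : i <= size y ->
  nth false (take i y ++ nseq (n - i) b) j =
  if j < i then nth false y j else if j < n then b else false.
Proof.
move=> hi; rewrite nth_cat size_takel //; case: ltnP => hj.
  by rewrite nth_take.
rewrite nth_nseq; case: (ltnP (j - i) (n - i)) => h1; case: (ltnP j n) => h2 //;
  exfalso; lia.
Qed.

Lemma A_fwd n (e : n.+1.-tuple bool) (y : n.-tuple bool) :
  y \in Aset n.+1 e -> exists i, [/\ 0 < i, i <= n &
    val e = take i y ++ nseq (n.+1 - i) (~~ nth false y i.-1)].
Proof.
rewrite inE => /existsP [[i ilt] /andP [ht /forallP hp]].
move: ht; rewrite /is_t /= => /and4P [i0 _ hne /forallP hall].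
have iln : i <= n by [].
exists i; split => //.
have sy : i <= size y by rewrite size_tuple.
apply: (@eq_from_nth _ false).
  by rewrite size_cat size_takel // size_nseq size_tuple; lia.
move=> j; rewrite size_tuple => hj; rewrite nthS //.
case: ifP => hji.
  have hjn : j < n by lia.
  by move: (hp (Ordinal hjn)) => /=; rewrite hji /= => /eqP.
rewrite hj.
have hi1 : i.-1 < n by lia.
have hlt : i.-1 < i by lia.
move: (hp (Ordinal hi1)) => /=; rewrite hlt /=.
move=> /eqP ->.
move: (hall (Ordinal hj)) (hall (Ordinal ilt)) => /=; rewrite leqnn.
rewrite (_ : i <= j) /=; last by lia.
move=> /eqP -> /eqP h2; move: hne; rewrite h2.
by case: (nth false e i.-1); case: (nth false e n).
Qed.

Lemma A_bwd n (y : n.-tuple bool) i (hsz : size (take i y ++ nseq (n.+1 - i) (~~ nth false y i.-1)) == n.+1) :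
  0 < i -> i <= n -> y \in Aset n.+1 (Tuple hsz).
Proof.
move=> i0 iln.
have sy : i <= size y by rewrite size_tuple.
have ilt : i < n.+1 by [].
rewrite inE; apply/existsP; exists (Ordinal ilt); apply/andP; split.
  rewrite /is_t /= i0 ilt !nthS //=.
  apply/andP; split.
    rewrite ltnn ilt; case: ifP => h; last by exfalso; move/negbT: h; lia.
    by case: (nth false y i.-1).
  apply/forallP => j /=; apply/implyP => hj.
  rewrite nthS // ltnNge hj /= ltn_ord ltnNge iln /= ltnSn.
  done.
apply/forallP => j /=; apply/implyP => hj.
by rewrite nthS // hj.
Qed.

Lemma exists_e n (y : n.-tuple bool) k : 0 < k -> k <= n ->
  exists e : n.+1.-tuple bool, wt n.+1 e = k /\ y \in Aset n.+1 e.
Proof.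
case: n y => [|m] y k0 kn; first by lia.
have sy : size y = m.+1 by rewrite size_tuple.
pose F (i : 'I_m.+1) : 'I_m.+1 := inord (Fv y i.+1).-1.
have Fb (i : 'I_m.+1) : 0 < Fv y i.+1 <= m.+1.
  by have := @Fv_bd y i.+1 (ltn0Sn _); rewrite sy; apply.
have Fi : injective F.
  move=> i j /(congr1 val); rewrite /F /= !inordK;
    try by (move: (Fb i) (Fb j); lia).
  move=> h; apply: val_inj => /=.
  have : i.+1 = j.+1.
    apply: (Fv_inj y) => //; rewrite ?sy //.
    by move: (Fb i) (Fb j); lia.
  by case.
have [G FG GF] := injF_bij Fi.
set j := G (inord k.-1).
have hj : F j = inord k.-1 by rewrite /j GF.
have hFv : Fv y j.+1 = k.
  move: (congr1 val hj); rewrite /F /= !inordK;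
    try by (move: (Fb j); lia).
have hsz : size (take j.+1 y ++ nseq (m.+2 - j.+1) (~~ nth false y j.+1.-1)) == m.+2.
  have := ltn_ord j; rewrite size_cat size_takel ?sy // size_nseq; move=> ?; apply/eqP; lia.
exists (Tuple hsz); split; last by apply: A_bwd.
rewrite /wt /= count_cat count_nseq -hFv /Fv sy /=.
by rewrite mulnC.
Qed.

Lemma uniq_e n (y : n.-tuple bool) (e g : n.+1.-tuple bool) :
  y \in Aset n.+1 e -> y \in Aset n.+1 g -> wt n.+1 e = wt n.+1 g -> e = g.
Proof.
move=> /A_fwd [i [i0 iln he]] /A_fwd [j [j0 jln hg]].
have sy : size y = n by rewrite size_tuple.
have we : wt n.+1 e = Fv y i by rewrite /wt he count_cat count_nseq /Fv sy mulnC.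
have wg : wt n.+1 g = Fv y j by rewrite /wt hg count_cat count_nseq /Fv sy mulnC.
rewrite we wg => h.
have eij : i = j by apply: (Fv_inj y); rewrite ?sy.
by apply: val_inj; rewrite he hg eij.
Qed.

Theorem corollary1 (d s k : nat) :
  0 < d -> ~~ odd d -> 0 < s -> 2 * s <= d -> 0 < k -> k < s ->
  (\bigcup_(e : s.-tuple bool | wt s e == k) Bset d s e = Xset d s k) /\
  (forall e g : s.-tuple bool, wt s e = k -> wt s g = k -> e <> g ->
     Bset d s e :&: Bset d s g = set0).
Proof.
move=> d0 ev s0 ds k0 ks.
case: s s0 ds ks => [//|n] _ ds ks.
split.
  apply/setP => x; apply/bigcupP/idP.
    by move=> [e /eqP he]; rewrite /Bset in_set he => /andP [].
  move=> hx.
  have [e [we ye]] := @exists_e n (xpp d n.+1 x) k k0 ks.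
  exists e; first by rewrite we.
  by rewrite /Bset in_set we hx ye.
move=> e g we wg neq; apply/setP => x; rewrite in_setI in_set0.
apply/negP => /andP [].
rewrite /Bset in_set => /andP [_ h1]; rewrite in_set => /andP [_ h2].
by apply: neq; apply: (@uniq_e n _ e g h1 h2); rewrite we wg.
Qed.
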